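(* Let $X\subseteq[\omega]^\omega$ be closed such that $|x\cap y|=\omega$ for all $x,y\in X$. Then $X$ is $\sigma$-compact.
   Context: $[\omega]^\omega$ is the set of infinite subsets of $\omega$, topologized as a subspace of $\mathcal{P}(\omega)\cong 2^\omega$ (equivalently, by identifying each infinite set with its increasing enumeration, as a subspace of $\omega^\omega$). *)

(* Defs.v *)
From HB Require Import structures.
From mathcomp Require Import all_boot all_order all_algebra.
From mathcomp Require Import all_classical all_reals topology cantor.
Set Implicit Arguments. Unset Strict Implicit. Unset Printing Implicit Defensive.
Local Open Scope classical_set_scope.

(* P(omega) is identified with cantor_space = nat -> bool with the product
   topology (x n = true iff n is in the set). *)

Definition infinite_subset (x : cantor_space) : Prop :=
  forall n : nat, exists m : nat, (n <= m)%N /\ x m = true.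

Definition omega_omega : set cantor_space := [set x | infinite_subset x].

Definition setI_nat (x y : cantor_space) : cantor_space := fun n => x n && y n.

Definition closed_in_omega_omega (X : set cantor_space) : Prop :=
  X `<=` omega_omega /\ exists C : set cantor_space, closed C /\ X = C `&` omega_omega.

Definition sigma_compact (T : topologicalType) (X : set T) : Prop :=
  exists K : nat -> set T, (forall n, compact (K n)) /\ X = \bigcup_n K n.

(* Main.v *)
Require Import Defs.
From HB Require Import structures.
From mathcomp Require Import all_boot all_order all_algebra.
From mathcomp Require Import all_classical all_reals topology cantor.
Local Open Scope classical_set_scope.
Lemma closed_coord (i : nat) (b : bool) : closed [set y : cantor_space | y i = b].
Proof.
have -> : [set y : cantor_space | y i = b] = (proj i) @^-1` [set b] by [].
apply: preimage_closed; last exact: discrete_closed.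
by move=> x _; apply: proj_continuous.
Qed.

Definition agree (y : cantor_space) (s : seq bool) :=
  forall i, (i < size s)%N -> y i = nth false s i.

Lemma closed_cyl s : closed [set y | agree y s].
Proof.
have -> : [set y | agree y s] =
  \bigcap_(i in [set i | (i < size s)%N]) [set y : cantor_space | y i = nth false s i].
  by apply/seteqP; split => y H i Hi; apply: H.
by apply: closed_bigI => i _; apply: closed_coord.
Qed.

Lemma closed_meet m h : closed [set y : cantor_space | exists i, (m <= i < h)%N /\ y i].
Proof.
have -> : [set y : cantor_space | exists i, (m <= i < h)%N /\ y i] =
  \bigcup_(i in [set i | (m <= i < h)%N]) [set y : cantor_space | y i = true].
  by apply/seteqP; split => y; [case=> i [Hi Hy]; exists i|case=> i Hi Hy; exists i].
apply: closed_bigcup => [|i _]; last exact: closed_coord.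
apply: (sub_finite_set _ (finite_II h)) => i /= /andP[_ ->].
by [].
Qed.

Lemma closed_compact (A : set cantor_space) : closed A -> compact A.
Proof.
move=> cA; exact: (subclosed_compact cA cantor_space_compact).
Qed.

Lemma nested_closed (D : nat -> set cantor_space) :
  (forall n, closed (D n)) -> (forall n, D n !=set0) ->
  (forall n, D n.+1 `<=` D n) -> exists p, forall n, D n p.
Proof.
move=> cD neD decD.
have /choice [d Hd] : forall n, exists x, D n x by move=> n; case: (neD n) => x; exists x.
have decD' : forall n k, (n <= k)%N -> D k `<=` D n.
  move=> n k /subnK <-; elim: (k - n)%N => // j IH x; rewrite addSn => /decD; exact: IH.
have [|p [_ clp]] := @cantor_space_compact (d @ \oo) _ _; first exact: filterT.
exists p => n.
apply: cD; move: clp; rewrite clusterE; apply.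
by exists n => // k /= Hk; apply: (decD' _ _ Hk).
Qed.

Lemma sc_bigcup (A : nat -> set cantor_space) :
  (forall i, sigma_compact (A i)) -> sigma_compact (\bigcup_i A i).
Proof.
move=> H; have /choice [K HK] : forall i, exists K : nat -> set cantor_space,
  (forall n, compact (K n)) /\ A i = \bigcup_n K n by move=> i; exact: H.
exists (fun n => match (unpickle n : option (nat * nat)) with
                 | Some (i, j) => K i j | None => set0 end); split.
  move=> n; case: (unpickle n) => [[i j]|]; [exact: (HK i).1|exact: compact0].
apply/seteqP; split => y.
  case=> i _; rewrite (HK i).2 => -[j _ Kij]; exists (pickle (i, j)) => //.
  by rewrite pickleK.
case=> n _; case E: (unpickle n) => [[i j]|] // Kij.
by exists i => //; rewrite (HK i).2; exists j.
Qed.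

Lemma sc_setU (A B : set cantor_space) :
  sigma_compact A -> sigma_compact B -> sigma_compact (A `|` B).
Proof.
move=> hA hB.
have -> : A `|` B = \bigcup_i (if i is 0 then A else B).
  apply/seteqP; split => y.
    by case=> Hy; [exists 0|exists 1].
  by case=> -[|i] _ Hy; [left|right].
by apply: sc_bigcup => -[|i].
Qed.

Lemma sc_compact (A : set cantor_space) : compact A -> sigma_compact A.
Proof.
move=> cA; exists (fun _ => A); split => //.
by apply/seteqP; split => y; [exists 0|case].
Qed.

Lemma sc_set0 : sigma_compact (@set0 cantor_space).
Proof. exact/sc_compact/compact0. Qed.

Definition Xs (X : set cantor_space) s := X `&` [set y | agree y s].
Definition good (X : set cantor_space) s := sigma_compact (Xs X s).
Definition prefix (s t : seq bool) :=
  (size s <= size t)%N /\ forall i, (i < size s)%N -> nth false s i = nth false t i.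
Definition hasnew (t u : seq bool) :=
  exists i, (size t <= i < size u)%N /\ nth false u i.
Definition jumpy X t := ~ good X t /\ forall b, exists u,
  [/\ prefix t u, ~ good X u, hasnew t u &
      forall i, (size t <= i < size u)%N -> nth false u i -> (b <= i)%N].

Lemma nth_true_size (s : seq bool) i : nth false s i -> (i < size s)%N.
Proof. by apply: contraTT; rewrite -leqNgt => H; rewrite nth_default. Qed.
Arguments nth_true_size {s i}.

Lemma prefix_trans s t u : prefix s t -> prefix t u -> prefix s u.
Proof.
move=> [st Hst] [tu Htu]; split; first exact: leq_trans st tu.
move=> i Hi; rewrite Hst // Htu //; exact: leq_trans Hi st.
Qed.
Arguments prefix_trans {s t u}.

Lemma prefix_refl s : prefix s s.
Proof. by split. Qed.

Lemma agree_mkseq y m : agree y (mkseq y m).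
Proof. by move=> i; rewrite size_mkseq => Hi; rewrite nth_mkseq. Qed.

Lemma prefix_mkseq y s m : agree y s -> (size s <= m)%N -> prefix s (mkseq y m).
Proof.
move=> ys sm; split; first by rewrite size_mkseq.
by move=> i Hi; rewrite nth_mkseq ?(leq_trans Hi sm) // ys.
Qed.

Lemma agree_prefix y s t : agree y t -> prefix s t -> agree y s.
Proof.
move=> yt [st Hst] i Hi; rewrite Hst // yt //; exact: leq_trans Hi st.
Qed.
Arguments agree_prefix {y s t}.

Lemma bad_nonempty X s : ~ good X s -> Xs X s !=set0.
Proof.
move=> bs; apply/set0P/eqP => E; apply: bs; rewrite /good E; exact: sc_set0.
Qed.

Lemma key X C : closed C -> X = C `&` omega_omega ->
  forall s, ~ good X s -> exists t, prefix s t /\ jumpy X t.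
Proof.
move=> cC hX s bs; apply: contrapT => Hn; apply: bs.
have Hb : forall t, exists b, (prefix s t /\ ~ good X t) -> forall u,
    prefix t u -> ~ good X u -> hasnew t u ->
    exists i, [/\ (size t <= i < size u)%N, nth false u i & (i < b)%N].
  move=> t; case: (pselect (prefix s t /\ ~ good X t)); last first.
    by move=> h; exists 0 => /h.
  move=> [pt bt]; have nj : ~ jumpy X t by move=> jt; apply: Hn; exists t.
  apply: contrapT => Hc; apply: nj; split => // b.
  apply: contrapT => Hu; apply: Hc; exists b => _ u ptu bu hn.
  apply: contrapT => Hi; apply: Hu; exists u; split => //.
  move=> i Hi1 Hi2; rewrite leqNgt; apply/negP => ib; by apply: Hi; exists i; split.
have /choice [bb Hbb] := Hb.
pose H m := (\max_(t : m.-tuple bool) bb t)%N.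
pose K := C `&` [set y | agree y s] `&`
  \bigcap_(m in [set m | (size s <= m)%N]) [set y | exists i, (m <= i < H m)%N /\ y i].
pose A n := [set y | exists t, unpickle n = Some t /\ prefix s t /\ good X t /\ Xs X t y].
rewrite /good; have -> : Xs X s = K `|` \bigcup_n A n.
  apply/seteqP; split => y.
    move=> [Xy ys].
    case: (pselect (exists t, prefix s t /\ good X t /\ agree y t)).
      move=> [t [st [gt yt]]]; right; exists (pickle t) => //.
      by exists t; rewrite pickleK; split.
    move=> Nt; left; split.
      by split => //; move: Xy; rewrite hX => -[].
    move=> m /= sm.
    have yinf : infinite_subset y by move: Xy; rewrite hX => -[].
    pose t := mkseq y m.
    have st : prefix s t by apply: prefix_mkseq.
    have bt : ~ good X t by move=> gt; apply: Nt; exists t; split => //; split => //; apply: agree_mkseq.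
    have [k [mk yk]] := yinf m.
    pose u := mkseq y k.+1.
    have tu : prefix t u.
      by apply: prefix_mkseq; [apply: agree_mkseq|rewrite size_mkseq; apply: leqW].
    have bu : ~ good X u.
      by move=> gu; apply: Nt; exists u; split => //; [exact: prefix_trans st tu|split => //; apply: agree_mkseq].
    have hn : hasnew t u.
      by exists k; rewrite !size_mkseq mk ltnSn nth_mkseq.
    have [i [/andP[ti iu] ui ib]] := Hbb t (conj st bt) u tu bu hn.
    exists i; split.
      rewrite -[m](size_mkseq y) ti /=.
      apply: (leq_trans ib); rewrite /H.
      have := @leq_bigmax _ (fun t0 : (size t).-tuple bool => bb t0) (in_tuple t).
      rewrite /= size_mkseq; exact.
    by move: ui; rewrite /u nth_mkseq // -(size_mkseq y k.+1).
  case.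
    move=> [[Cy ys] Ky]; split => //; rewrite hX; split => // n.
    have [i [/andP[mi _] yi]] := Ky (maxn n (size s)) (leq_maxr _ _).
    by exists i; split => //; apply: leq_trans mi; apply: leq_maxl.
  case=> n _ [t [_ [st [_ [Xy yt]]]]]; split => //; exact: agree_prefix yt st.
apply: sc_setU.
  apply/sc_compact/closed_compact.
  apply: closedI; first by apply: closedI => //; apply: closed_cyl.
  by apply: closed_bigI => m _; apply: closed_meet.
apply: sc_bigcup => n.
case: (pselect (exists t, unpickle n = Some t /\ prefix s t /\ good X t)).
  move=> [t [Et [st gt]]].
  have -> : A n = Xs X t.
    apply/seteqP; split => y.
      by case=> t' [Et' [_ [_ Hy]]]; move: Et'; rewrite Et => -[->].
    by move=> Hy; exists t.
  exact: gt.
move=> Nt; have -> : A n = set0.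
  by apply/seteqP; split => y // [t [Et [st [gt _]]]]; apply: Nt; exists t.
exact: sc_set0.
Qed.
Arguments key {X C}.

Lemma step X C : closed C -> X = C `&` omega_omega ->
  forall s b, jumpy X s -> exists s', [/\ prefix s s', jumpy X s',
    (forall i, (size s <= i < size s')%N -> nth false s' i -> (b <= i)%N),
    (b < size s')%N & exists i, (b <= i)%N /\ nth false s' i].
Proof.
move=> cC hX s b [bs Hj].
have [u [su bu [j [/andP[sj ju] uj]] nu]] := Hj b.
have bj : (b <= j)%N by apply: nu => //; rewrite sj ju.
have [s' [us' js']] := key cC hX _ bu.
have [us'1 us'2] := us'.
exists s'; split.
- exact: prefix_trans su us'.
- exact: js'.
- move=> i /andP[si is'] ti; case: (ltnP i (size u)) => iu.
    by apply: nu; [rewrite si iu|rewrite us'2].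
  exact: leq_trans bj (ltnW (leq_trans ju iu)).
- exact: leq_ltn_trans bj (leq_trans ju us'1).
- by exists j; split => //; rewrite -us'2.
Qed.
Arguments step {X C}.

Definition Disj r (p q : seq bool) :=
  forall i, (r <= i)%N -> nth false p i -> nth false q i -> False.

Lemma Disj_sym r p q : Disj r p q -> Disj r q p.
Proof. by move=> D i ri a b; apply: (D i ri b a). Qed.
Arguments Disj_sym {r p q}.

Lemma disj_ext r s s' t : Disj r s t -> prefix s s' ->
  (forall i, (size s <= i < size s')%N -> nth false s' i -> (size t <= i)%N) ->
  Disj r s' t.
Proof.
move=> D [ss' H] N i ri t1 t2.
have it := nth_true_size t2.
case: (ltnP i (size s)) => isz.
  by apply: (D i ri _ t2); rewrite H.
have := N i; rewrite isz (nth_true_size t1) => /(_ isT t1).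
by rewrite leqNgt it.
Qed.
Arguments disj_ext {r s s' t}.

Lemma chain_limit X C : closed C -> X = C `&` omega_omega ->
  forall c : nat -> seq bool,
  (forall n, prefix (c n) (c n.+1)) -> (forall n, (n <= size (c n))%N) ->
  (forall n, ~ good X (c n)) ->
  (forall n, exists i, (n <= i)%N /\ nth false (c n.+1) i) ->
  X (fun i => nth false (c i.+1) i) /\
  forall n, agree (fun i => nth false (c i.+1) i) (c n).
Proof.
move=> cC hX c ch sz bad inf.
have chain : forall n m, (n <= m)%N -> prefix (c n) (c m).
  move=> n m /subnK <-; elim: (m - n)%N => [|k IH]; first exact: prefix_refl.
  by rewrite addSn; apply: prefix_trans IH (ch _).
set y := fun i => nth false (c i.+1) i.
have ag : forall n, agree y (c n).
  move=> n i Hi; rewrite /y.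
  have [_ H1] := chain n (maxn n i.+1) (leq_maxl _ _).
  have [_ H2] := chain i.+1 (maxn n i.+1) (leq_maxr _ _).
  by rewrite H1 // H2 // (leq_trans (ltnSn i) (sz _)).
split => //; rewrite hX; split.
  have [|||p Hp] := @nested_closed (fun n => C `&` [set w | agree w (c n)]).
  - by move=> n; apply: closedI => //; apply: closed_cyl.
  - move=> n; have [w [Xw wc]] := @bad_nonempty X _ (bad n).
    by exists w; split => //; move: Xw; rewrite hX => -[].
  - by move=> n w [Cw wc]; split => //; apply: agree_prefix wc (ch n).
  have -> : y = p.
    apply: funext => i; rewrite /y.
    by have [_ ->] := Hp i.+1; [|exact: sz].
  by have [] := Hp 0.
move=> n; have [i [ni ci]] := inf n; exists i; split => //.
by rewrite (ag n.+1 i (nth_true_size ci)).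
Qed.
Arguments chain_limit {X C}.

Theorem lemma5p4 (X : set cantor_space) :
  closed_in_omega_omega X ->
  (forall x y, X x -> X y -> infinite_subset (setI_nat x y)) ->
  sigma_compact X.
Proof.
move=> [_ [C [cC hX]]] Hint; apply: contrapT => nsc.
have b0 : ~ good X [::].
  rewrite /good /Xs; have -> : X `&` [set y | agree y [::]] = X by
    apply/seteqP; split => [y []//|y Xy]; split.
  exact: nsc.
have [rho [_ jr]] := key cC hX _ b0.
have /choice [f Hf] : forall p : seq bool * nat, exists s', jumpy X p.1 ->
    [/\ prefix p.1 s', jumpy X s',
    (forall i, (size p.1 <= i < size s')%N -> nth false s' i -> (p.2 <= i)%N),
    (p.2 < size s')%N & exists i, (p.2 <= i)%N /\ nth false s' i].
  case=> s b; case: (pselect (jumpy X s)) => [j|nj].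
    by have [s' H] := step cC hX _ b j; exists s'.
  by exists [::].
pose stp (p : seq bool * seq bool) :=
  let s1 := f (p.1, size p.2) in (s1, f (p.2, size s1)).
pose st n := iter n stp (rho, rho).
have Inv : forall n, [/\ jumpy X (st n).1, jumpy X (st n).2, (n <= size (st n).1)%N,
   (n <= size (st n).2)%N & Disj (size rho) (st n).1 (st n).2].
  elim=> [|n [j1 j2 z1 z2 D]].
    split => //= i ri t1; have := nth_true_size t1; rewrite ltnNge ri.
    by [].
  have [p1 j1' N1 l1 _] := Hf ((st n).1, size (st n).2) j1.
  have [p2 j2' N2 l2 _] := Hf ((st n).2, size (f ((st n).1, size (st n).2))) j2.
  move: p1 N1 l1 p2 N2 l2 => /= p1 N1 l1 p2 N2 l2.
  rewrite /st /= -/(st n); split => //.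
  - exact: leq_ltn_trans z2 l1.
  - exact: ltn_trans (leq_ltn_trans z2 l1) l2.
  - have D1 := disj_ext D p1 N1.
    exact: Disj_sym (disj_ext (Disj_sym D1) p2 N2).
have [y1 ag1] : X (fun i => nth false (st i.+1).1 i) /\
    forall n, agree (fun i => nth false (st i.+1).1 i) (st n).1.
  apply: (chain_limit cC hX).
  - by move=> n; have [j1 _ _ _ _] := Inv n; have [] := Hf ((st n).1, size (st n).2) j1.
  - by move=> n; have [] := Inv n.
  - by move=> n; have [[]] := Inv n.
  - move=> n; have [j1 _ _ z2 _] := Inv n.
    have [_ _ _ _ [i [ti ci]]] := Hf ((st n).1, size (st n).2) j1.
    by exists i; split => //; apply: leq_trans z2 ti.
have [y2 ag2] : X (fun i => nth false (st i.+1).2 i) /\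
    forall n, agree (fun i => nth false (st i.+1).2 i) (st n).2.
  apply: (chain_limit cC hX).
  - move=> n; have [j1 j2 _ _ _] := Inv n.
    by have [] := Hf ((st n).2, size (f ((st n).1, size (st n).2))) j2.
  - by move=> n; have [] := Inv n.
  - by move=> n; have [_ []] := Inv n.
  - move=> n; have [j1 j2 _ _ _] := Inv n.
    have [_ _ _ l1 _] := Hf ((st n).1, size (st n).2) j1.
    have [_ _ _ _ [i [ti ci]]] := Hf ((st n).2, size (f ((st n).1, size (st n).2))) j2.
    have [_ _ z1 _ _] := Inv n.+1.
    exists i; split => //; apply: leq_trans ti.
    exact: leq_trans (leqnSn n) z1.
have [m [rm /andP[ym zm]]] := Hint _ _ y1 y2 (size rho).
have [_ _ z1 z2 D] := Inv m.+1.
by apply: (D m rm); [rewrite -(ag1 m.+1 m z1)|rewrite -(ag2 m.+1 m z2)].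
Qed.
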